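(* There exists a (greedy) algorithm which, given any Hierarchical Correlation Clustering instance on $n$ data points, returns an HC tree $T_1$ satisfying \[hcc_G(T_1)\ge \tfrac13(n-2)\sum_{i<j}w^s_{ij}+\tfrac23 n\sum_{i<j}w^d_{ij}.\]
   Context: An HC tree on $V$ ($|V|=n$) is a rooted tree whose leaves are in bijection with $V$; $|T_{ij}|$ is the number of leaves of the subtree rooted at the lowest common ancestor of $i$ and $j$. Each pair $i<j$ has a similarity weight $w^s_{ij}\ge0$ and a dissimilarity weight $w^d_{ij}\ge0$, and $hcc_G(T)=\sum_{i<j}w^s_{ij}(n-|T_{ij}|)+\sum_{i<j}w^d_{ij}|T_{ij}|$. *)

(* Defs.v *)
From HB Require Import structures.
From mathcomp Require Import all_boot all_order all_algebra.
Set Implicit Arguments. Unset Strict Implicit. Unset Printing Implicit Defensive.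
Import Order.TTheory GRing.Theory Num.Theory.

Inductive hctree (n : nat) : Type :=
| Leaf of 'I_n
| Node of seq (hctree n).

Arguments Leaf {n}.
Arguments Node {n}.

Fixpoint leaves n (t : hctree n) : seq 'I_n :=
  match t with
  | Leaf v => [:: v]
  | Node cs => flatten (map (@leaves n) cs)
  end.

(* every internal node has at least one child (so leaves of the tree are
   exactly the Leaf constructors) *)
Fixpoint no_empty_node n (t : hctree n) : bool :=
  match t with
  | Leaf _ => true
  | Node cs => (~~ nilp cs) && all (@no_empty_node n) cs
  end.

Definition is_hc_tree n (t : hctree n) : bool :=
  no_empty_node t && perm_eq (leaves t) (enum 'I_n).

(* |T_ij| : number of leaves of the subtree rooted at the lowest common
   ancestor of i and j (for i, j leaves of t) *)
Fixpoint lca_size n (t : hctree n) (i j : 'I_n) : nat :=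
  match t with
  | Leaf _ => 1
  | Node cs =>
      let fix go (l : seq (hctree n)) : nat :=
        match l with
        | [::] => size (leaves t)
        | c :: l' => if (i \in leaves c) && (j \in leaves c)
                     then lca_size c i j else go l'
        end in go cs
  end.

Local Open Scope ring_scope.

Definition hcc (R : realFieldType) n (ws wd : 'I_n -> 'I_n -> R)
    (t : hctree n) : R :=
  \sum_(i < n) \sum_(j < n | (i < j)%N)
     (ws i j * (n%:R - (lca_size t i j)%:R) + wd i j * (lca_size t i j)%:R).

(* Main.v *)
Require Import Defs.
From mathcomp Require Import all_boot all_order all_algebra ring lra.
Import Order.TTheory GRing.Theory Num.Theory.
Local Open Scope ring_scope.
Set Implicit Arguments. Unset Strict Implicit.
Lemma lcaN n (v : 'I_n) t i j : i != j -> lca_size (Node [:: Leaf v; t]) i j =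
  if (i \in leaves t) && (j \in leaves t) then lca_size t i j else (size (leaves t)).+1.
Proof.
move=> ij /=. rewrite !inE cats0.
have -> // : (i == v) && (j == v) = false.
by apply/negbTE; apply: contra ij => /andP[/eqP -> /eqP ->].
Qed.

Section S.
Variables (R : realFieldType) (n : nat).
Implicit Types (s : seq 'I_n) (f : 'I_n -> 'I_n -> R).

Definition F s f := \sum_(i < n) \sum_(j < n | (i < j)%N && (i \in s) && (j \in s)) f i j.
Definition D v s f := \sum_(i < n) \sum_(j < n | (i < j)%N && (i \in s) && (j \in s)
   && ((i == v) || (j == v))) f i j.

Lemma F_split v s f : F s f = F (filter (predC1 v) s) f + D v s f.
Proof.
rewrite /F /D -big_split; apply: eq_bigr => i _ /=.
rewrite (bigID (fun j => (i == v) || (j == v))) /= addrC; congr (_ + _).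
apply: eq_bigl => j; rewrite !mem_filter /=.
by case: (i == v); case: (j == v); rewrite ?andbT ?andbF.
Qed.

Lemma sum_D s f : uniq s -> \sum_(v <- s) D v s f = F s f *+ 2.
Proof.
move=> us; rewrite /D /F -sumrMnl.
under eq_bigr do under eq_bigr do rewrite big_mkcondr.
rewrite exchange_big; apply: eq_bigr => i _.
rewrite -sumrMnl exchange_big; apply: eq_bigr => j /andP[/andP[ij iS] jS].
rewrite -big_mkcond big_const_seq.
have -> : count (fun v => (i == v) || (j == v)) s = 2%N.
  have := count_predUI (pred1 i) (pred1 j) s.
  rewrite !count_uniq_mem // iS jS.
  have -> : count (predI (pred1 i) (pred1 j)) s = 0%N.
    apply/eqP; rewrite -leqn0 leqNgt -has_count; apply/hasP => -[x _] /= /andP[/eqP -> /eqP ji].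
    by rewrite ji ltnn in ij.
  rewrite addn0 => H; rewrite -[RHS]/(true + true)%N -H; apply: eq_count => x /=; by rewrite eq_sym (eq_sym j).
by rewrite /= addr0 mulr2n.
Qed.

Lemma F_add s f h : F s (fun i j => f i j + h i j) = F s f + F s h.
Proof. rewrite /F -big_split; apply: eq_bigr => i _; by rewrite -big_split. Qed.

Lemma D_scale v s f c : D v s (fun i j => f i j * c) = D v s f * c.
Proof. rewrite /D mulr_suml; apply: eq_bigr => i _; by rewrite mulr_suml. Qed.

Lemma F1 x f : F [:: x] f = 0.
Proof.
rewrite /F big1 // => i _; rewrite big1 // => j /andP[/andP[ij]]; rewrite !inE.
by move=> /eqP ix /eqP jx; move: ij; rewrite ix jx ltnn.
Qed.

Lemma exists_ge (E : 'I_n -> R) s : s != [::] ->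
  exists2 v, v \in s & \sum_(u <- s) E u <= (size s)%:R * E v.
Proof.
elim: s => [//|a s IH] _.
case: (altP (s =P [::])) => [-> | /IH [v vs H]].
  by exists a; rewrite ?inE ?eqxx // big_seq1 mul1r.
rewrite big_cons /=.
case: (lerP (E v) (E a)) => h.
  exists a; first by rewrite inE eqxx.
  rewrite mulrS mulrDl mul1r lerD2l; apply: (le_trans H); apply: ler_wpM2l => //.
exists v; first by rewrite inE vs orbT.
by rewrite mulrS mulrDl mul1r; apply: lerD => //; apply: ltW.
Qed.
End S.

Section Main.
Variables (R : realFieldType) (n : nat) (ws wd : 'I_n -> 'I_n -> R).
Hypothesis hws : forall i j : 'I_n, (i < j)%N -> 0 <= ws i j.
Hypothesis hwd : forall i j : 'I_n, (i < j)%N -> 0 <= wd i j.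

Definition g (t : hctree n) (M : nat) i j :=
  ws i j * (M%:R - (lca_size t i j)%:R) + wd i j * (lca_size t i j)%:R.

Lemma F_ge0 s : 0 <= F s wd.
Proof.
rewrite /F; apply: sumr_ge0 => i _; apply: sumr_ge0 => j /andP[/andP[ij _] _].
exact: hwd.
Qed.

Lemma gen m : forall s : seq 'I_n, size s = m.+1 -> uniq s ->
  exists t, (no_empty_node t && perm_eq (leaves t) s) /\
   3^-1 * ((m.+1)%:R - 2) * F s ws + 2 / 3 * (m.+1)%:R * F s wd <= F s (g t m.+1).
Proof.
elim: m => [|m IH] s.
  case: s => [|x [|]] //= _ _; exists (Leaf x); split; first by rewrite /= perm_refl.
  by rewrite !F1 !mulr0 addr0.
move=> sz us.
set M := (m.+2)%:R.
set E := fun v => 2 / 3 * (F s ws - F s wd) - M / 3 * D v s ws + (M + 2) / 3 * D v s wd.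
have sE : \sum_(v <- s) E v = 4 / 3 * F s wd.
  rewrite /E !big_split /= sumrN -!mulr_sumr !sum_D // big_const_seq count_predT iter_addr_0 sz.
  rewrite -(mulr_natr (F s ws - F s wd) m.+2) -/M !mulr2n; clearbody M; move: (F s ws) (F s wd) => a b.
  by field.
have sne : s != [::] by rewrite -size_eq0 sz.
have [v vs Hv] := exists_ge E sne.
have Ev : 0 <= E v.
  have Mpos : 0 < M by rewrite /M ltr0n.
  rewrite sz -/M in Hv.
  have : 0 <= M * E v.
    apply: le_trans Hv; rewrite sE; apply: mulr_ge0; last exact: F_ge0.
    by rewrite divr_ge0 // ler0n.
  by rewrite (pmulr_rge0 _ Mpos).
set s' := filter (predC1 v) s.
have us' : uniq s' := filter_uniq _ us.
have sz' : size s' = m.+1 by rewrite /s' -rem_filter // size_rem // sz.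
have [t' [/andP[ne' pe'] IHt]] := IH s' sz' us'.
have vt' : v \notin leaves t' by rewrite (perm_mem pe') mem_filter /= eqxx.
exists (Node [:: Leaf v; t']); split.
  rewrite /= ne' /= cats0 perm_sym (perm_trans (perm_to_rem vs)) // perm_cons rem_filter // perm_sym.
  exact: pe'.
rewrite (F_split v s (g _ _)) (F_split v s ws) (F_split v s wd) -/s'.
have e1 : F s' (g (Node [:: Leaf v; t']) m.+2) = F s' (g t' m.+1) + F s' ws.
  rewrite -F_add; apply: eq_bigr => i _; apply: eq_bigr => j /andP[/andP[ij iS] jS].
  rewrite /g lcaN; last by rewrite neq_ltn ij.
  rewrite -(perm_mem pe') in iS; rewrite -(perm_mem pe') in jS; rewrite iS jS /=.
  rewrite -[(m.+2)%N]addn1 natrD; ring.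
have e2 : D v s (g (Node [:: Leaf v; t']) m.+2) = D v s wd * M.
  rewrite -D_scale; apply: eq_bigr => i _; apply: eq_bigr => j /andP[/andP[/andP[ij iS] jS] ijv].
  rewrite /g lcaN; last by rewrite neq_ltn ij.
  have -> : (i \in leaves t') && (j \in leaves t') = false.
    by case/orP: ijv => /eqP ->; rewrite (negbTE vt') ?andbF.
  by rewrite (perm_size pe') sz' subrr mulr0 add0r.
rewrite e1 e2.
move: Ev; rewrite /E (F_split v s ws) (F_split v s wd) -/s' => Ev.
have hm : (m.+1)%:R = M - 1 :> R by rewrite /M mulrS; ring.
rewrite hm in IHt; clearbody M.
move: (F s' ws) (F s' wd) (D v s ws) (D v s wd) (F s' (g t' m.+1)) IHt Ev => a b c d e IHt Ev.
lra.
Qed.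
End Main.

Theorem proposition1 (R : realFieldType) (n : nat) (hn : (0 < n)%N)
    (ws wd : 'I_n -> 'I_n -> R)
    (hws : forall i j : 'I_n, (i < j)%N -> 0 <= ws i j)
    (hwd : forall i j : 'I_n, (i < j)%N -> 0 <= wd i j) :
  exists T1 : hctree n, is_hc_tree T1 /\
    hcc ws wd T1 >=
      3^-1 * (n%:R - 2) * (\sum_(i < n) \sum_(j < n | (i < j)%N) ws i j)
      + 2 / 3 * n%:R * (\sum_(i < n) \sum_(j < n | (i < j)%N) wd i j).
Proof.
case: n hn ws wd hws hwd => [//|m] _ ws wd hws hwd.
have [t [/andP[ne pe] H]] := @gen _ _ ws wd hwd _ (enum 'I_m.+1) (size_enum_ord _) (enum_uniq _).
exists t; split; first by rewrite /is_hc_tree ne pe.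
have FE : forall f : 'I_m.+1 -> 'I_m.+1 -> R,
    F (enum 'I_m.+1) f = \sum_(i < m.+1) \sum_(j < m.+1 | (i < j)%N) f i j.
  by move=> f; rewrite /F; apply: eq_bigr => i _; apply: eq_bigl => j; rewrite !mem_enum !andbT.
by rewrite -!FE /hcc -FE.
Qed.
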